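(* For a prime $p$, integers $M$, $N\ge1$, $s\ge1$ and an integer vector $\mathbf{a}=(a_0,\ldots,a_{s-1})$ let $$S_{s,p}(M,N;\mathbf{a})=\sum_{u=M+1}^{M+N}\mathbf{e}_p\Big(\sum_{j=0}^{s-1}a_j q_p(u+j)\Big).$$ Then for any integer $s\ge1$, $$\max_{\gcd(a_0,\ldots,a_{s-1},p)=1}|S_{s,p}(M,N;\mathbf{a})|\ll s\,p\log p$$ uniformly over integers $M$ and $N$ with $p^2>N\ge1$.
   Context: For a prime $p$ and an integer $u$ with $\gcd(u,p)=1$, the Fermat quotient $q_p(u)$ is the unique integer with $q_p(u)\equiv (u^{p-1}-1)/p \pmod p$ and $0\le q_p(u)\le p-1$; also $q_p(kp)=0$ for all $k\in\mathbb{Z}$. $\mathbf{e}_p(z)=\exp(2\pi i z/p)$. $U\ll V$ means $|U|\le cV$ for some constant $c>0$, which may depend on $s$. *)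

(* Defs.v *)
From Stdlib Require Import Reals ZArith Znumtheory List.
Open Scope R_scope.

(* Fermat quotient q_p(u): 0 if p | u, otherwise ((u^(p-1)-1)/p) mod p,
   the unique representative in [0, p-1]. (For p prime and p not dividing u,
   p divides u^(p-1)-1 exactly, so Z.div is exact division.) *)
Definition fermat_q (p u : Z) : Z :=
  if (u mod p =? 0)%Z then 0%Z
  else (((u ^ (p - 1) - 1) / p) mod p)%Z.

Fixpoint rsum (n : nat) (f : nat -> R) : R :=
  match n with
  | O => 0
  | S m => rsum m f + f m
  end.

Fixpoint zsum (n : nat) (f : nat -> Z) : Z :=
  match n with
  | O => 0%Z
  | S m => (zsum m f + f m)%Z
  end.

Definition ep_re (p z : Z) : R := cos (2 * PI * IZR z / IZR p).
Definition ep_im (p z : Z) : R := sin (2 * PI * IZR z / IZR p).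

Definition phase (s : nat) (p : Z) (a : nat -> Z) (u : Z) : Z :=
  zsum s (fun j => (a j * fermat_q p (u + Z.of_nat j))%Z).

Definition S_re (s : nat) (p M N : Z) (a : nat -> Z) : R :=
  rsum (Z.to_nat N) (fun k => ep_re p (phase s p a (M + 1 + Z.of_nat k)%Z)).
Definition S_im (s : nat) (p M N : Z) (a : nat -> Z) : R :=
  rsum (Z.to_nat N) (fun k => ep_im p (phase s p a (M + 1 + Z.of_nat k)%Z)).

Definition S_abs (s : nat) (p M N : Z) (a : nat -> Z) : R :=
  sqrt (S_re s p M N a ^ 2 + S_im s p M N a ^ 2).

Definition gcd_vec (s : nat) (a : nat -> Z) (p : Z) : Z :=
  fold_right Z.gcd p (map a (seq 0 s)).

(* Main.v *)
Require Import Defs.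
From Stdlib Require Import Reals ZArith Znumtheory List Lia Lra.
From mathcomp Require ssreflect ssrbool ssrnat div prime binomial.
From Coquelicot Require Complex.

Open Scope Z_scope.

Lemma expn_pow (a n : nat) : ssrnat.expn a n = Nat.pow a n.
Proof. induction n. reflexivity. rewrite ssrnat.expnS, IHn, ssrnat.mulnE. reflexivity. Qed.

Lemma modn_mod (m d : nat) : (0 < d)%nat -> div.modn m d = Nat.modulo m d.
Proof.
  intros Hd. pose proof (div.divn_eq m d) as E.
  assert (L: (div.modn m d < d)%nat).
  { apply (ssrbool.elimT ssrnat.ltP). apply div.ltn_pmod. apply (ssrbool.introT ssrnat.leP). lia. }
  rewrite ssrnat.mulnE, ssrnat.addnE in E.
  apply (Nat.mod_unique m d (div.divn m d)); lia.
Qed.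

Lemma prime_bridge (p : Z) : prime p -> is_true (prime.prime (Z.to_nat p)).
Proof.
  intros Hp. pose proof (prime_ge_2 p Hp) as H2.
  apply (ssrbool.introT prime.primeP). split.
  - apply (ssrbool.introT ssrnat.leP). lia.
  - intros d Hd. destruct (ssrbool.elimT div.dvdnP Hd) as [k Hk]. rewrite ssrnat.mulnE in Hk.
    assert (Hdiv : (Z.of_nat d | p)).
    { exists (Z.of_nat k). rewrite <- Nat2Z.inj_mul, <- Hk. lia. }
    destruct (prime_divisors p Hp _ Hdiv) as [E|[E|[E|E]]].
    + lia.
    + apply (ssrbool.introT ssrbool.orP). left. apply (ssrbool.introT eqtype.eqP). lia.
    + apply (ssrbool.introT ssrbool.orP). right. apply (ssrbool.introT eqtype.eqP). lia.
    + lia.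
Qed.

Lemma flt (p u : Z) : prime p -> u mod p <> 0 -> (u ^ (p - 1)) mod p = 1.
Proof.
  intros Hp Hu. pose proof (prime_ge_2 p Hp) as H2.
  set (a := Z.to_nat (u mod p)).
  assert (Ha : Z.of_nat a = u mod p).
  { unfold a. rewrite Z2Nat.id; [reflexivity|]. apply Z.mod_pos_bound. lia. }
  pose proof (@binomial.fermat_little a (Z.to_nat p) (prime_bridge p Hp)) as F.
  rewrite expn_pow, !modn_mod in F by lia.
  apply (f_equal Z.of_nat) in F. rewrite !Nat2Z.inj_mod, Nat2Z.inj_pow, Ha, Z2Nat.id in F by lia.
  rewrite Z.mod_pow_l, Z.mod_mod in F by lia.
  (* u^p mod p = u mod p *)
  assert (Hd : (p | u * (u ^ (p - 1) - 1))).
  { apply Z.mod_divide; [lia|].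
    replace (u * (u ^ (p - 1) - 1)) with (u ^ p - u).
    - rewrite Zminus_mod, F, Z.sub_diag. reflexivity.
    - replace p with (Z.succ (p - 1)) at 1 by lia. rewrite Z.pow_succ_r by lia. ring. }
  destruct (prime_mult p Hp _ _ Hd) as [D|D].
  - exfalso. apply Hu. apply Z.mod_divide; [lia|exact D].
  - apply Z.mod_divide in D; [|lia].
    rewrite Zminus_mod in D. 
    assert (0 <= u ^ (p - 1) mod p < p) by (apply Z.mod_pos_bound; lia).
    rewrite (Z.mod_small 1) in D by lia.
    destruct (Z.eq_dec (u ^ (p - 1) mod p) 1); [assumption|].
    apply Z.mod_divide in D; [|lia]. destruct D as [k Hk]. set (x := u ^ (p - 1) mod p) in *. assert (k = 0 \/ k >= 1 \/ k <= -1) by lia. nia.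
Qed.

Lemma eqmod (p a b k : Z) : a = b + k * p -> a mod p = b mod p.
Proof. intros ->. apply Z_mod_plus_full. Qed.

Lemma binom1 (u x n : Z) : 0 <= n -> exists R, (u + x) ^ (n + 1) = u ^ (n + 1) + (n + 1) * x * u ^ n + x * x * R.
Proof.
  intros Hn. pattern n. apply natlike_ind; [| |exact Hn].
  - exists 0. rewrite Z.add_0_l, !Z.pow_1_r, Z.pow_0_r. ring.
  - intros m Hm [R HR]. exists (u * R + (m + 1) * u ^ m + x * R).
    replace (Z.succ m + 1) with (Z.succ (m + 1)) by lia.
    rewrite !Z.pow_succ_r by lia. rewrite HR.
    rewrite !Z.pow_add_r, !Z.pow_1_r by lia. unfold Z.succ. ring.
Qed.

Definition wq (p u : Z) : Z := if (u mod p =? 0) then 0 else u ^ (p - 2).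

Lemma fq_shift (p u t : Z) : 2 <= p ->
  fermat_q p (u + p * t) mod p = (fermat_q p u - t * wq p u) mod p.
Proof.
  intros Hp. unfold fermat_q, wq.
  replace ((u + p * t) mod p) with (u mod p).
  2:{ rewrite (Z.mul_comm p t), Z_mod_plus_full. reflexivity. }
  destruct (u mod p =? 0).
  - rewrite Z.mul_0_r, Z.sub_0_r. reflexivity.
  - destruct (binom1 u (p * t) (p - 2) ltac:(lia)) as [R HR].
    replace (p - 2 + 1) with (p - 1) in HR by lia.
    rewrite HR. rewrite Z.mod_mod by lia.
    replace (u ^ (p - 1) + (p - 1) * (p * t) * u ^ (p - 2) + p * t * (p * t) * R - 1)
      with ((u ^ (p - 1) - 1) + ((p - 1) * t * u ^ (p - 2) + p * t * t * R) * p) by ring.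
    rewrite Z.div_add by lia.
    rewrite Zminus_mod_idemp_l.
    apply eqmod with (k := t * u ^ (p - 2) + t * t * R). ring.
Qed.

Definition Bq (s : nat) (p : Z) (a : nat -> Z) (u : Z) : Z :=
  zsum s (fun j => a j * wq p (u + Z.of_nat j)).

Lemma zsum_mod (p : Z) n (F G : nat -> Z) : p <> 0 ->
  (forall j, (j < n)%nat -> F j mod p = G j mod p) -> zsum n F mod p = zsum n G mod p.
Proof.
  intros Hp. induction n; intros H; simpl. reflexivity.
  rewrite Zplus_mod, IHn, (H n) by (try intros; try apply H; lia). rewrite <- Zplus_mod. reflexivity.
Qed.

Lemma phase_shift s p a u t : 2 <= p ->
  phase s p a (u + p * t) mod p = (phase s p a u - t * Bq s p a u) mod p.
Proof.
  intros Hp. unfold phase, Bq.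
  induction s; simpl. f_equal; ring.
  rewrite Zplus_mod, IHs. rewrite Zmult_mod.
  replace (u + p * t + Z.of_nat s) with ((u + Z.of_nat s) + p * t) by ring.
  rewrite fq_shift by lia.
  rewrite <- Zmult_mod, <- Zplus_mod.
  f_equal. ring.
Qed.

Open Scope Z_scope.

Inductive polyd : nat -> (Z -> Z) -> Prop :=
| pd0 : forall P c, (forall x, P x = c) -> polyd 0 P
| pdS : forall d P c Q, polyd d Q -> (forall x, P x = c + x * Q x) -> polyd (S d) P.

Lemma pd_ext d P Q : polyd d P -> (forall x, P x = Q x) -> polyd d Q.
Proof.
  intros H E. destruct H as [P c H|d P c R HR H].
  - apply pd0 with c. intros x. rewrite <- E. apply H.
  - apply pdS with c R; auto. intros x. rewrite <- E. apply H.
Qed.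

Lemma pd_inv0 P : polyd 0 P -> exists c, forall x, P x = c.
Proof. intros H. inversion H. eauto. Qed.

Lemma pd_invS d P : polyd (S d) P -> exists c Q, polyd d Q /\ forall x, P x = c + x * Q x.
Proof. intros H. inversion H. eauto. Qed.

Lemma pd_mono d P : polyd d P -> polyd (S d) P.
Proof.
  revert P. induction d; intros P H.
  - destruct (pd_inv0 P H) as [c Hc].
    apply pdS with c (fun _ => 0). apply pd0 with 0; auto. intros x. rewrite Hc. ring.
  - destruct (pd_invS d P H) as [c [Q [HQ E]]]. apply pdS with c Q; auto.
Qed.

Lemma pd_add d P Q : polyd d P -> polyd d Q -> polyd d (fun x => P x + Q x).
Proof.
  revert P Q. induction d; intros P Q H1 H2.
  - destruct (pd_inv0 P H1) as [c Hc]. destruct (pd_inv0 Q H2) as [c' Hc'].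
    apply pd0 with (c + c'). intros x. rewrite Hc, Hc'. reflexivity.
  - destruct (pd_invS d P H1) as [c [Q1 [HQ1 E1]]].
    destruct (pd_invS d Q H2) as [c' [Q2 [HQ2 E2]]].
    apply pdS with (c + c') (fun x => Q1 x + Q2 x). apply IHd; auto.
    intros x. rewrite E1, E2. ring.
Qed.

Lemma pd_scale d P k : polyd d P -> polyd d (fun x => k * P x).
Proof.
  revert P. induction d; intros P H.
  - destruct (pd_inv0 P H) as [c Hc].
    apply pd0 with (k * c). intros x. rewrite Hc. reflexivity.
  - destruct (pd_invS d P H) as [c [Q [HQ E]]].
    apply pdS with (k * c) (fun x => k * Q x). apply IHd; auto.
    intros x. rewrite E. ring.
Qed.

Lemma pd_mullin d P m : polyd d P -> polyd (S d) (fun x => (x + m) * P x).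
Proof.
  intros H. apply pd_ext with (fun x => m * P x + (0 + x * P x)).
  - apply pd_add. apply pd_mono, pd_scale, H. apply pdS with 0 P; auto.
  - intros x. ring.
Qed.

Lemma pd_const c : polyd 0 (fun _ => c).
Proof. apply pd0 with c. auto. Qed.

Lemma pd_le d d' P : (d <= d')%nat -> polyd d P -> polyd d' P.
Proof. intros Hl H. induction Hl; auto. apply pd_mono; auto. Qed.

Fixpoint zprod (n : nat) (f : nat -> Z) : Z :=
  match n with O => 1 | S m => zprod m f * f m end.


Lemma pd_zsum d n (F : nat -> Z -> Z) : (forall j, (j < n)%nat -> polyd d (F j)) ->
  polyd d (fun x => zsum n (fun j => F j x)).
Proof.
  induction n; intros H; simpl.
  - apply pd_le with 0%nat. lia. apply pd_const.
  - apply pd_add. apply IHn. intros; apply H; lia. apply H; lia.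
Qed.

Lemma pd_prod n (b : nat -> bool) (e : nat -> Z) :
  polyd n (fun x => zprod n (fun i => if b i then 1 else x + e i)).
Proof.
  induction n; simpl.
  - apply pd_const.
  - destruct (b n).
    + apply pd_ext with (fun x => zprod n (fun i => if b i then 1 else x + e i)).
      apply pd_mono; auto. intros; ring.
    + apply pd_ext with (fun x => (x + e n) * zprod n (fun i => if b i then 1 else x + e i)).
      apply pd_mullin; auto. intros; ring.
Qed.

Lemma pd_factor d P r : polyd (S d) P -> exists R, polyd d R /\ forall x, P x - P r = (x - r) * R x.
Proof.
  revert P. induction d; intros P H.
  - destruct (pd_invS 0 P H) as [c [Q [HQ E]]]. destruct (pd_inv0 Q HQ) as [q Hq].
    exists (fun _ => q). split. apply pd_const.
    intros x. rewrite !E, !Hq. ring.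
  - destruct (pd_invS (S d) P H) as [c [Q [HQ E]]].
    destruct (IHd Q HQ) as [R [HR ER]].
    exists (fun x => Q x + r * R x). split.
    + apply pd_add. exact HQ. apply pd_mono, pd_scale; auto.
    + intros x. rewrite !E. specialize (ER x).
      transitivity ((x - r) * Q x + r * (Q x - Q r)). ring. rewrite ER. ring.
Qed.

Fixpoint cnt (n : nat) (f : nat -> bool) : nat :=
  match n with O => O | S m => (cnt m f + if f m then 1 else 0)%nat end.

Lemma cnt_le_or n f g h : (forall k, (k < n)%nat -> f k = true -> g k = true \/ h k = true) ->
  (cnt n f <= cnt n g + cnt n h)%nat.
Proof.
  induction n; intros H; simpl. lia.
  assert (IH := IHn (fun k Hk => H k ltac:(lia))).
  destruct (f n) eqn:E.
  - destruct (H n ltac:(lia) E) as [G|G]; rewrite G; destruct (g n), (h n); lia.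
  - destruct (g n), (h n); lia.
Qed.

Lemma cnt_le1 n f : (forall k k', (k < n)%nat -> (k' < n)%nat -> f k = true -> f k' = true -> k = k') ->
  (cnt n f <= 1)%nat.
Proof.
  induction n; intros H; simpl. lia.
  destruct (f n) eqn:E.
  - assert (cnt n f = 0)%nat.
    { clear IHn. assert (forall m, (m <= n)%nat -> cnt m f = 0%nat).
      { induction m; intros Hm; simpl. reflexivity.
        rewrite IHm by lia. destruct (f m) eqn:E2; [|reflexivity].
        exfalso. assert (m = n) by (apply H; auto; lia). lia. }
      apply H0; lia. }
    lia.
  - assert (cnt n f <= 1)%nat by (apply IHn; intros; apply H; auto; lia). lia.
Qed.

Lemma cnt_false n f : (forall k, (k < n)%nat -> f k = false) -> cnt n f = 0%nat.
Proof. induction n; intros H; simpl. auto. rewrite IHn, H; auto. Qed.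

Lemma cnt_pos n f : (0 < cnt n f)%nat -> exists k, (k < n)%nat /\ f k = true.
Proof.
  induction n; simpl; intros H. lia.
  destruct (f n) eqn:E. exists n; split; auto.
  destruct IHn as [k [Hk Fk]]. lia. exists k; split; auto.
Qed.

Lemma modp_zero_div p a : p <> 0 -> (a mod p = 0 <-> (p | a)).
Proof. intros Hp. split; intros H. apply Z.mod_divide; auto. apply Z.mod_divide; auto. Qed.

Lemma roots_bound (p : Z) : prime p -> forall d P y, polyd d P -> (P y mod p <> 0)%Z ->
  (cnt (Z.to_nat p) (fun v => (P (Z.of_nat v) mod p =? 0)%Z) <= d)%nat.
Proof.
  intros Hp. pose proof (prime_ge_2 p Hp) as H2.
  induction d; intros P y H Hy.
  - destruct (pd_inv0 P H) as [c Hc]. rewrite cnt_false. lia. intros k _.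
    rewrite Hc. rewrite Hc in Hy. apply Z.eqb_neq; auto.
  - destruct (cnt (Z.to_nat p) (fun v => (P (Z.of_nat v) mod p =? 0)%Z)) eqn:C. lia.
    rewrite <- C.
    destruct (cnt_pos (Z.to_nat p) (fun v => (P (Z.of_nat v) mod p =? 0)%Z)) as [r [Hr Pr]]. lia.
    apply Z.eqb_eq in Pr.
    destruct (pd_factor d P (Z.of_nat r) H) as [R [HR ER]].
    assert (Ry : R y mod p <> 0).
    { intros Ry. apply Hy. specialize (ER y).
      apply modp_zero_div; [lia|]. apply modp_zero_div in Pr; [|lia]. apply modp_zero_div in Ry; [|lia].
      replace (P y) with (P (Z.of_nat r) + (y - Z.of_nat r) * R y) by lia.
      apply Z.divide_add_r; auto. apply Z.divide_mul_r; auto. }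
    specialize (IHd R y HR Ry).
    eapply Nat.le_trans.
    + apply (cnt_le_or _ _ (fun v => Nat.eqb v r) (fun v => (R (Z.of_nat v) mod p =? 0)%Z)).
      intros k Hk Pk. apply Z.eqb_eq in Pk. specialize (ER (Z.of_nat k)).
      assert (D : (p | (Z.of_nat k - Z.of_nat r) * R (Z.of_nat k))).
      { rewrite <- ER. apply Z.divide_sub_r; apply modp_zero_div; auto; lia. }
      destruct (prime_mult p Hp _ _ D) as [D1|D1].
      * left. apply Nat.eqb_eq. destruct D1 as [m Hm].
        assert (m = 0) by (assert (m = 0 \/ m >= 1 \/ m <= -1) by lia; nia). nia.
      * right. apply Z.eqb_eq. apply modp_zero_div; auto; lia.
    + assert (cnt (Z.to_nat p) (fun v => Nat.eqb v r) <= 1)%nat.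
      { apply cnt_le1. intros k k' _ _ E1 E2. apply Nat.eqb_eq in E1, E2. lia. }
      lia.
Qed.

Open Scope Z_scope.

Lemma zprod_zero n f i : (i < n)%nat -> f i = 0 -> zprod n f = 0.
Proof.
  induction n; intros Hi Hf; simpl. lia.
  destruct (Nat.eq_dec i n). subst. rewrite Hf. ring.
  rewrite IHn by lia. ring.
Qed.

Lemma prime_ndiv1 p : prime p -> ~ (p | 1).
Proof. intros Hp D. pose proof (prime_ge_2 p Hp). apply Z.divide_pos_le in D; lia. Qed.

Lemma zprod_nz p n f : prime p -> (forall i, (i < n)%nat -> ~ (p | f i)) -> ~ (p | zprod n f).
Proof.
  intros Hp. induction n; intros H; simpl. apply prime_ndiv1; auto.
  intros D. destruct (prime_mult p Hp _ _ D) as [D1|D1].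
  apply IHn; auto. apply (H n); auto.
Qed.

Lemma zsum_single n F j0 : (j0 < n)%nat -> (forall j, (j < n)%nat -> j <> j0 -> F j = 0) -> zsum n F = F j0.
Proof.
  induction n; intros Hj H; simpl. lia.
  destruct (Nat.eq_dec j0 n).
  - subst. assert (zsum n F = 0).
    { clear IHn Hj. assert (forall m, (m <= n)%nat -> zsum m F = 0).
      { induction m; intros Hm; simpl. auto. rewrite IHm, H by lia. auto. }
      auto. }
    lia.
  - rewrite IHn, (H n) by (auto; lia). ring.
Qed.

Lemma zprod_skip_big n j f : (n <= j)%nat -> zprod n (fun i => if Nat.eqb i j then 1 else f i) = zprod n f.
Proof.
  induction n; intros H; simpl. auto.
  rewrite IHn by lia. replace (Nat.eqb n j) with false by (symmetry; apply Nat.eqb_neq; lia). auto.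
Qed.

Lemma zprod_split n j f : (j < n)%nat -> zprod n (fun i => if Nat.eqb i j then 1 else f i) * f j = zprod n f.
Proof.
  induction n; intros H; simpl. lia.
  destruct (Nat.eq_dec j n).
  - subst. rewrite Nat.eqb_refl. rewrite zprod_skip_big by lia. ring.
  - replace (Nat.eqb n j) with false by (symmetry; apply Nat.eqb_neq; lia).
    rewrite <- IHn by lia. ring.
Qed.

Lemma zsum_mul n F k : zsum n F * k = zsum n (fun j => F j * k).
Proof. induction n; simpl. ring. rewrite <- IHn. ring. Qed.

Lemma zsum_sub n F G : zsum n F - zsum n G = zsum n (fun j => F j - G j).
Proof. induction n; simpl. ring. rewrite <- IHn. ring. Qed.

Lemma cnt_bad n m (F : nat -> nat -> bool) : (forall j, (j < m)%nat -> (cnt n (fun v => F v j) <= 1)%nat) ->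
  (cnt n (fun v => Nat.ltb 0 (cnt m (fun j => F v j))) <= m)%nat.
Proof.
  induction m; intros H.
  - simpl. rewrite cnt_false. lia. intros; reflexivity.
  - eapply Nat.le_trans.
    + apply (cnt_le_or _ _ (fun v => Nat.ltb 0 (cnt m (fun j => F v j))) (fun v => F v m)).
      intros k _ Hk. simpl in Hk. apply Nat.ltb_lt in Hk.
      destruct (F k m) eqn:E. right; auto. left. apply Nat.ltb_lt. lia.
    + specialize (IHm (fun j Hj => H j ltac:(lia))). specialize (H m ltac:(lia)). lia.
Qed.

Lemma cnt_pos_of n F j : (j < n)%nat -> F j = true -> (0 < cnt n F)%nat.
Proof.
  induction n; intros Hj E; simpl. lia.
  destruct (Nat.eq_dec j n). subst. rewrite E. lia.
  specialize (IHn ltac:(lia) E). lia.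
Qed.

Section Count.
Variables (p M c : Z) (s : nat) (a : nat -> Z) (j0 : nat).
Hypothesis Hp : prime p.
Hypothesis Hsp : Z.of_nat s < p.
Hypothesis Hj0 : (j0 < s)%nat.
Hypothesis Ha : a j0 mod p <> 0.

Let e (i : nat) : Z := M + 1 + Z.of_nat i.
Let G (j : nat) (x : Z) : Z := zprod s (fun i => if Nat.eqb i j then 1 else x + e i).
Let Qc (x : Z) : Z := zsum s (fun j => a j * G j x) - c * G s x.

Lemma Qc_deg : polyd s Qc.
Proof.
  apply pd_ext with (fun x => zsum s (fun j => a j * G j x) + (- c) * G s x).
  - apply pd_add. apply pd_zsum. intros j _. apply pd_scale. apply pd_prod.
    apply pd_scale. apply pd_prod.
  - intros x. unfold Qc. ring.
Qed.

Lemma Qc_nz : Qc (- (M + 1 + Z.of_nat j0)) mod p <> 0.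
Proof.
  pose proof (prime_ge_2 p Hp).
  set (y := - (M + 1 + Z.of_nat j0)).
  assert (Gs : G s y = 0).
  { unfold G. apply (zprod_zero _ _ j0); auto.
    replace (Nat.eqb j0 s) with false by (symmetry; apply Nat.eqb_neq; lia). unfold y, e. ring. }
  assert (Gj : forall j, (j < s)%nat -> j <> j0 -> G j y = 0).
  { intros j Hj Hne. unfold G. apply (zprod_zero _ _ j0); auto.
    replace (Nat.eqb j0 j) with false by (symmetry; apply Nat.eqb_neq; lia). unfold y, e. ring. }
  unfold Qc. rewrite Gs. rewrite (zsum_single s _ j0) by (auto; intros j Hj Hne; rewrite Gj; auto; ring).
  intros D. apply Z.mod_divide in D; [|lia].
  destruct (prime_mult p Hp _ _ (ltac:(replace (a j0 * G j0 y - c * 0) with (a j0 * G j0 y) in D by ring; exact D))) as [D1|D1].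
  - apply Ha. apply Z.mod_divide; auto; lia.
  - revert D1. apply zprod_nz; auto. intros i Hi. destruct (Nat.eqb i j0) eqn:E.
    + apply prime_ndiv1; auto.
    + apply Nat.eqb_neq in E. unfold y, e. intros [k Hk].
      assert (k = 0 \/ k >= 1 \/ k <= -1) by lia. nia.
Qed.

Lemma b_count (Hc : 0 <= c < p) :
  (cnt (Z.to_nat p) (fun v => (Bq s p a (M + 1 + Z.of_nat v) mod p =? c)%Z) <= 2 * s)%nat.
Proof.
  pose proof (prime_ge_2 p Hp) as H2.
  eapply Nat.le_trans.
  - apply (cnt_le_or _ _ (fun v => Nat.ltb 0 (cnt s (fun j => ((Z.of_nat v + e j) mod p =? 0)%Z)))
                         (fun v => (Qc (Z.of_nat v) mod p =? 0)%Z)).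
    intros v Hv Hb. apply Z.eqb_eq in Hb.
    destruct (Nat.ltb 0 (cnt s (fun j => ((Z.of_nat v + e j) mod p =? 0)%Z))) eqn:Bad. left; auto.
    right. apply Nat.ltb_ge in Bad.
    assert (NB : forall j, (j < s)%nat -> (Z.of_nat v + e j) mod p <> 0).
    { intros j Hj E. pose proof (cnt_pos_of s (fun j => ((Z.of_nat v + e j) mod p =? 0)%Z) j Hj) as P.
      simpl in P. rewrite (proj2 (Z.eqb_eq _ _) E) in P. specialize (P eq_refl). lia. }
    set (x := M + 1 + Z.of_nat v) in *.
    assert (K : (Bq s p a x * G s (Z.of_nat v)) mod p = zsum s (fun j => a j * G j (Z.of_nat v)) mod p).
    { unfold Bq. rewrite zsum_mul. apply zsum_mod; [lia|]. intros j Hj.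
      specialize (NB j Hj). unfold e in NB. replace (Z.of_nat v + (M + 1 + Z.of_nat j)) with (x + Z.of_nat j) in NB by (unfold x; ring).
      assert (GS : G s (Z.of_nat v) = G j (Z.of_nat v) * (x + Z.of_nat j)).
      { unfold G. rewrite (zprod_skip_big s s (fun i => Z.of_nat v + e i)) by lia.
        rewrite <- (zprod_split s j (fun i => Z.of_nat v + e i)) by auto.
        f_equal. unfold x, e. ring. }
      rewrite GS. unfold wq. rewrite (proj2 (Z.eqb_neq _ _) NB).
      replace (a j * (x + Z.of_nat j) ^ (p - 2) * (G j (Z.of_nat v) * (x + Z.of_nat j)))
        with (a j * G j (Z.of_nat v) * (x + Z.of_nat j) ^ (p - 1)).
      2:{ replace (p - 1) with (Z.succ (p - 2)) by lia. rewrite Z.pow_succ_r by lia. ring. }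
      rewrite Zmult_mod, flt by auto. rewrite Z.mul_1_r, Z.mod_mod by lia. reflexivity. }
    apply Z.eqb_eq. unfold Qc.
    rewrite Zminus_mod, <- K, <- Zminus_mod.
    replace (Bq s p a x * G s (Z.of_nat v) - c * G s (Z.of_nat v)) with ((Bq s p a x - c) * G s (Z.of_nat v)) by ring.
    rewrite Zmult_mod, Zminus_mod, Hb, (Z.mod_small c p Hc), Z.sub_diag. reflexivity.
  - pose proof (roots_bound p Hp s Qc _ Qc_deg Qc_nz) as R.
    assert (cnt (Z.to_nat p) (fun v => Nat.ltb 0 (cnt s (fun j => ((Z.of_nat v + e j) mod p =? 0)%Z))) <= s)%nat.
    { apply (cnt_bad _ _ (fun v j => ((Z.of_nat v + e j) mod p =? 0)%Z)). intros j _.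
      apply cnt_le1. intros k k' Hk Hk' E1 E2. apply Z.eqb_eq in E1, E2.
      apply Z.mod_divide in E1; [|lia]. apply Z.mod_divide in E2; [|lia].
      pose proof (Z.divide_sub_r _ _ _ E1 E2) as D. destruct D as [m Hm].
      assert (m = 0 \/ m >= 1 \/ m <= -1) by lia. unfold e in Hm. 
      assert (Z.of_nat k < p) by lia. assert (Z.of_nat k' < p) by lia. nia. }
    lia.
Qed.
End Count.

Close Scope Z_scope.
Open Scope R_scope.

Definition nrm (x y : R) := sqrt (x ^ 2 + y ^ 2).
Lemma nrm_tri a b c d : nrm (a + c) (b + d) <= nrm a b + nrm c d.
Proof. exact (Complex.Cmod_triangle (a, b) (c, d)). Qed.

Lemma nrm_le_abs x y : nrm x y <= Rabs x + Rabs y.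
Proof.
  unfold nrm. rewrite <- (sqrt_pow2 (Rabs x + Rabs y)) by (pose proof (Rabs_pos x); pose proof (Rabs_pos y); lra).
  apply sqrt_le_1_alt. rewrite <- (pow2_abs x), <- (pow2_abs y).
  pose proof (Rabs_pos x); pose proof (Rabs_pos y). nra.
Qed.

Lemma nrm_ge0 x y : 0 <= nrm x y.
Proof. apply sqrt_pos. Qed.

Lemma nrm_0 : nrm 0 0 = 0.
Proof. unfold nrm. replace (0 ^ 2 + 0 ^ 2) with 0 by ring. apply sqrt_0. Qed.

Lemma nrm_cs x : nrm (cos x) (sin x) = 1.
Proof. unfold nrm. replace (cos x ^ 2 + sin x ^ 2) with 1. apply sqrt_1.
  pose proof (sin2_cos2 x). unfold Rsqr in H. lra. Qed.

Lemma rsum_ext n f g : (forall k, (k < n)%nat -> f k = g k) -> rsum n f = rsum n g.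
Proof. induction n; intros H; simpl; auto. rewrite IHn, H; auto. Qed.

Lemma rsum_le n f g : (forall k, (k < n)%nat -> f k <= g k) -> rsum n f <= rsum n g.
Proof. induction n; intros H; simpl. lra. pose proof (H n ltac:(lia)). pose proof (IHn ltac:(auto)). lra. Qed.

Lemma rsum_const n c : rsum n (fun _ => c) = INR n * c.
Proof. induction n; simpl rsum. simpl; ring. rewrite IHn, S_INR. ring. Qed.

Lemma rsum_nrm n f g : nrm (rsum n f) (rsum n g) <= rsum n (fun k => nrm (f k) (g k)).
Proof.
  induction n; simpl rsum. rewrite nrm_0. lra.
  eapply Rle_trans. apply nrm_tri. lra.
Qed.

Lemma rsum_plus n f g : rsum n (fun k => f k + g k) = rsum n f + rsum n g.
Proof. induction n; simpl. ring. rewrite IHn. ring. Qed.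

Lemma rsum_scal n f c : rsum n (fun k => c * f k) = c * rsum n f.
Proof. induction n; simpl. ring. rewrite IHn. ring. Qed.

Lemma rsum_add n m f : rsum (n + m) f = rsum n f + rsum m (fun k => f (n + k)%nat).
Proof. induction m; simpl. rewrite Nat.add_0_r. ring. rewrite Nat.add_succ_r. simpl. rewrite IHm. ring. Qed.

Lemma rsum_extend n m f : (n <= m)%nat -> rsum n f = rsum m (fun k => if Nat.ltb k n then f k else 0).
Proof.
  intros H. induction H.
  - apply rsum_ext. intros k Hk. replace (Nat.ltb k n) with true by (symmetry; apply Nat.ltb_lt; auto). auto.
  - simpl. rewrite IHle. replace (Nat.ltb m n) with false by (symmetry; apply Nat.ltb_ge; lia). ring.
Qed.

Lemma rsum_block m n h : rsum (m * n) h = rsum m (fun t => rsum n (fun v => h (v + n * t)%nat)).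
Proof.
  induction m; simpl. auto.
  replace (n + m * n)%nat with (m * n + n)%nat by lia. rewrite rsum_add, IHm.
  f_equal. apply rsum_ext. intros k _. f_equal. lia.
Qed.

Lemma rsum_swap m n h : rsum m (fun t => rsum n (fun v => h t v)) = rsum n (fun v => rsum m (fun t => h t v)).
Proof.
  induction m; simpl.
  - induction n; simpl; auto. rewrite <- IHn. ring.
  - rewrite IHm. rewrite <- rsum_plus. auto.
Qed.

Lemma rsum_prefix n T (cond : nat -> bool) f : (T <= n)%nat ->
  (forall t, (t < n)%nat -> cond t = Nat.ltb t T) ->
  rsum n (fun t => if cond t then f t else 0) = rsum T f.
Proof.
  intros HT Hc. rewrite (rsum_extend T n f HT). apply rsum_ext. intros k Hk. rewrite Hc; auto.
Qed.

Lemma down_closed (cond : nat -> bool) : (forall t, cond (S t) = true -> cond t = true) ->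
  forall d t, cond (t + d)%nat = true -> cond t = true.
Proof. intros Hm d. induction d; intros t H. rewrite Nat.add_0_r in H; auto.
  apply IHd. apply Hm. rewrite <- Nat.add_succ_r. auto. Qed.

Lemma prefix_exists n (cond : nat -> bool) : (forall t, cond (S t) = true -> cond t = true) ->
  exists T, (T <= n)%nat /\ forall t, (t < n)%nat -> cond t = Nat.ltb t T.
Proof.
  intros Hm. induction n.
  - exists O. split. lia. intros; lia.
  - destruct IHn as [T [HT Ht]].
    destruct (Nat.eq_dec T n) as [->|Hne].
    + destruct (cond n) eqn:E.
      * exists (S n). split. lia. intros t Htn. destruct (Nat.eq_dec t n). subst. rewrite E. symmetry; apply Nat.ltb_lt; lia.
        rewrite Ht by lia. rewrite (proj2 (Nat.ltb_lt t n)) by lia. symmetry; apply Nat.ltb_lt; lia.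
      * exists n. split. lia. intros t Htn. destruct (Nat.eq_dec t n). subst. rewrite E. symmetry; apply Nat.ltb_ge; lia.
        apply Ht; lia.
    + exists T. split. lia. intros t Htn. destruct (Nat.eq_dec t n).
      * subst. destruct (cond n) eqn:E.
        -- exfalso. assert (cond T = true) by (apply (down_closed cond Hm (n - T)); replace (T + (n - T))%nat with n by lia; auto).
           rewrite Ht in H by lia. apply Nat.ltb_lt in H. lia.
        -- symmetry; apply Nat.ltb_ge; lia.
      * apply Ht; lia.
Qed.

Open Scope R_scope.

Lemma cos_periodZ x k : cos (x + 2 * IZR k * PI) = cos x.
Proof.
  destruct (Z_le_gt_dec 0 k).
  - rewrite <- (Z2Nat.id k) by auto. rewrite <- INR_IZR_INZ. apply cos_period.
  - replace x with ((x + 2 * IZR k * PI) + 2 * INR (Z.to_nat (- k)) * PI) at 2.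
    symmetry. apply cos_period. rewrite INR_IZR_INZ, Z2Nat.id by lia. rewrite opp_IZR. ring.
Qed.

Lemma sin_periodZ x k : sin (x + 2 * IZR k * PI) = sin x.
Proof.
  destruct (Z_le_gt_dec 0 k).
  - rewrite <- (Z2Nat.id k) by auto. rewrite <- INR_IZR_INZ. apply sin_period.
  - replace x with ((x + 2 * IZR k * PI) + 2 * INR (Z.to_nat (- k)) * PI) at 2.
    symmetry. apply sin_period. rewrite INR_IZR_INZ, Z2Nat.id by lia. rewrite opp_IZR. ring.
Qed.

Lemma ep_mod p z z' : (0 < p)%Z -> (z mod p = z' mod p)%Z -> ep_re p z = ep_re p z' /\ ep_im p z = ep_im p z'.
Proof.
  intros Hp H.
  assert (E : (z = z' + (z / p - z' / p) * p)%Z).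
  { pose proof (Z.div_mod z p ltac:(lia)). pose proof (Z.div_mod z' p ltac:(lia)). lia. }
  assert (IP : IZR p <> 0) by (apply not_0_IZR; lia).
  unfold ep_re, ep_im. rewrite E. rewrite plus_IZR, mult_IZR.
  replace (2 * PI * (IZR z' + IZR (z / p - z' / p) * IZR p) / IZR p)
    with (2 * PI * IZR z' / IZR p + 2 * IZR (z / p - z' / p) * PI) by (field; auto).
  rewrite cos_periodZ, sin_periodZ. auto.
Qed.

Lemma rsum_tele n f g : (forall t, f t = g t - g (S t)) -> rsum n f = g O - g n.
Proof. intros H. induction n; simpl. ring. rewrite IHn, H. ring. Qed.

Lemma geom_bound (al be : R) T : 0 < sin (be / 2) ->
  Rabs (rsum T (fun t => cos (al - INR t * be))) <= 1 / sin (be / 2) /\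
  Rabs (rsum T (fun t => sin (al - INR t * be))) <= 1 / sin (be / 2).
Proof.
  intros Hs.
  assert (C : rsum T (fun t => cos (al - INR t * be)) =
     / (2 * sin (be / 2)) * (sin (al + be / 2) - sin (al - INR T * be + be / 2))).
  { rewrite (rsum_tele T _ (fun t => / (2 * sin (be / 2)) * sin (al - INR t * be + be / 2))).
    simpl INR. replace (al - 0 * be + be / 2) with (al + be / 2) by lra. ring.
    intros t. rewrite S_INR.
    replace (al - (INR t + 1) * be + be / 2) with ((al - INR t * be) - be / 2) by lra.
    replace (al - INR t * be + be / 2) with ((al - INR t * be) + be / 2) by lra.
    rewrite (sin_plus (al - INR t * be) (be / 2)), (sin_minus (al - INR t * be) (be / 2)). field. lra. }
  assert (S : rsum T (fun t => sin (al - INR t * be)) =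
     / (2 * sin (be / 2)) * (cos (al - INR T * be + be / 2) - cos (al + be / 2))).
  { rewrite (rsum_tele T _ (fun t => - (/ (2 * sin (be / 2)) * cos (al - INR t * be + be / 2)))).
    simpl INR. replace (al - 0 * be + be / 2) with (al + be / 2) by lra. ring.
    intros t. rewrite S_INR.
    replace (al - (INR t + 1) * be + be / 2) with ((al - INR t * be) - be / 2) by lra.
    replace (al - INR t * be + be / 2) with ((al - INR t * be) + be / 2) by lra.
    rewrite (cos_plus (al - INR t * be) (be / 2)), (cos_minus (al - INR t * be) (be / 2)). field. lra. }
  assert (Hi : 0 < / (2 * sin (be / 2))) by (apply Rinv_0_lt_compat; lra).
  assert (K : / (2 * sin (be / 2)) * 2 = 1 / sin (be / 2)) by (field; lra).
  split.
  - rewrite C, Rabs_mult, (Rabs_pos_eq _ (Rlt_le _ _ Hi)). rewrite <- K.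
    apply Rmult_le_compat_l. lra.
    pose proof (SIN_bound (al + be / 2)). pose proof (SIN_bound (al - INR T * be + be / 2)).
    apply Rabs_le. lra.
  - rewrite S, Rabs_mult, (Rabs_pos_eq _ (Rlt_le _ _ Hi)). rewrite <- K.
    apply Rmult_le_compat_l. lra.
    pose proof (COS_bound (al + be / 2)). pose proof (COS_bound (al - INR T * be + be / 2)).
    apply Rabs_le. lra.
Qed.

Lemma sin_lb_exp a : sin_lb a = a - a^3/6 + a^5/120 - a^7/5040.
Proof. unfold sin_lb, sin_approx, sin_term. simpl. field. Qed.

Lemma sin_lin x : 0 <= x -> x <= 2 -> 2 / 5 * x <= sin x.
Proof.
  intros H0 H1.
  assert (x <= PI) by (pose proof PI2_1; lra).
  destruct (SIN x H0 H) as [L _]. rewrite sin_lb_exp in L.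
  assert (x^2 <= 4) by nra. assert (x^4 <= 16) by nra. assert (x^6 <= 64) by nra.
  assert (0 <= x^5/120) by (apply Rmult_le_pos; [apply pow_le; lra| lra]). nra.
Qed.

Lemma sin_half m P : 0 < m -> 2 * m <= P -> m / P <= sin (PI * m / P).
Proof.
  intros Hm HP. pose proof PI2_3_2. pose proof PI_4.
  assert (0 <= PI * m / P) by (apply Rmult_le_pos; [apply Rmult_le_pos|apply Rlt_le, Rinv_0_lt_compat]; lra).
  assert (PI * m / P <= PI / 2).
  { apply (Rmult_le_reg_r P). lra. unfold Rdiv. rewrite Rmult_assoc, Rinv_l, Rmult_1_r by lra. nra. }
  pose proof (sin_lin (PI * m / P) ltac:(lra) ltac:(lra)).
  assert (m / P <= 2 / 5 * (PI * m / P)); [|lra].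
  unfold Rdiv. assert (0 < / P) by (apply Rinv_0_lt_compat; lra). nra.
Qed.

Lemma inv_sin_bound (c p : R) : 0 < c -> c < p ->
  0 < sin (PI * c / p) /\ 1 / sin (PI * c / p) <= p / c + p / (p - c).
Proof.
  intros H0 H1.
  assert (A : forall m, 0 < m -> 2 * m <= p -> 0 < sin (PI * m / p) /\ 1 / sin (PI * m / p) <= p / m).
  { intros m Hm Hp. pose proof (sin_half m p Hm Hp).
    assert (0 < m / p) by (apply Rdiv_lt_0_compat; lra). split. lra.
    replace (p / m) with (1 / (m / p)) by (field; lra).
    apply Rmult_le_compat_l. lra. apply Rinv_le_contravar; lra. }
  assert (P1 : 0 <= p / c) by (apply Rlt_le, Rdiv_lt_0_compat; lra).
  assert (P2 : 0 <= p / (p - c)) by (apply Rlt_le, Rdiv_lt_0_compat; lra).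
  destruct (Rle_dec (2 * c) p).
  - destruct (A c H0 r). split; lra.
  - replace (PI * c / p) with (PI - PI * (p - c) / p) by (field; lra). rewrite sin_PI_x.
    destruct (A (p - c) ltac:(lra) ltac:(lra)). split; lra.
Qed.

Open Scope R_scope.

Definition H (n : nat) := rsum n (fun k => 1 / INR (S k)).

Lemma ln_step n : (1 <= n)%nat -> ln (INR n) + 1 / INR (S n) <= ln (INR (S n)).
Proof.
  intros Hn. rewrite S_INR. assert (1 <= INR n) by (apply (le_INR 1); auto).
  set (x := INR n) in *.
  destruct (Rle_dec (ln x + 1 / (x + 1)) (ln (x + 1))) as [r|r]; auto. exfalso.
  apply Rnot_le_lt in r.
  assert (E := exp_increasing _ _ r). rewrite exp_ln in E by lra.
  rewrite exp_plus, exp_ln in E by lra.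
  pose proof (exp_ineq1_le (- (1 / (x + 1)))).
  assert (exp (1 / (x + 1)) * exp (- (1 / (x + 1))) = 1).
  { rewrite <- exp_plus. replace (1 / (x + 1) + - (1 / (x + 1))) with 0 by ring. apply exp_0. }
  assert (0 < exp (1 / (x + 1))) by apply exp_pos.
  assert (x * (1 + - (1 / (x + 1))) = x * x / (x + 1)) by (field; lra).
  assert (1 + - (1 / (x + 1)) = x / (x + 1)) by (field; lra).
  rewrite H5 in H1. set (y := x / (x + 1)) in *. set (e := exp (1 / (x + 1))) in *. set (e' := exp (- (1 / (x + 1)))) in *.
  assert (e * y <= 1) by nra.
  assert ((x + 1) * y = x) by (unfold y; field; lra).
  assert (0 < y) by (apply Rdiv_lt_0_compat; lra).
  nra.
Qed.

Lemma harm n : (1 <= n)%nat -> H n <= 1 + ln (INR n).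
Proof.
  intros Hn. induction Hn.
  - unfold H. simpl. rewrite ln_1. lra.
  - unfold H in *. apply Rle_trans with (rsum m (fun k => 1 / INR (S k)) + 1 / INR (S m)). right; reflexivity. pose proof (ln_step m Hn). lra.
Qed.

Lemma rsum_shift n f : rsum (S n) f = f O + rsum n (fun k => f (S k)).
Proof.
  induction n. simpl. ring.
  change (rsum (S (S n)) f) with (rsum (S n) f + f (S n)). rewrite IHn.
  change (rsum (S n) (fun k => f (S k))) with (rsum n (fun k => f (S k)) + f (S n)). ring.
Qed.

Lemma rsum_reflect n f : rsum n f = rsum n (fun k => f (n - S k)%nat).
Proof.
  induction n. reflexivity.
  rewrite (rsum_shift n (fun k => f (S n - S k)%nat)).
  change (rsum (S n) f) with (rsum n f + f n). rewrite IHn.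
  replace (S n - 1)%nat with n by lia. rewrite Rplus_comm. f_equal.
Qed.

Definition Fb (p : R) (c : nat) : R :=
  if Nat.eqb c 0 then p else 2 * (p / INR c + p / (p - INR c)).

Lemma Fsum P : (2 <= P)%nat -> rsum P (Fb (INR P)) <= INR P + 4 * INR P * (1 + ln (INR P)).
Proof.
  intros HP. set (p := INR P).
  assert (Hp : 2 <= p) by (apply (le_INR 2) in HP; auto).
  destruct P as [|m]. lia.
  assert (E : rsum (S m) (Fb p) = rsum (S m) (fun c => if Nat.eqb c 0 then p else 0)
      + 2 * p * rsum (S m) (fun c => if Nat.eqb c 0 then 0 else 1 / INR c)
      + 2 * p * rsum (S m) (fun c => if Nat.eqb c 0 then 0 else 1 / (p - INR c))).
  { rewrite <- !rsum_scal, <- !rsum_plus. apply rsum_ext. intros k Hk. unfold Fb.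
    destruct k as [|k]. cbn [Nat.eqb]. ring. cbn [Nat.eqb].
    assert (INR (S k) < p) by (unfold p; apply lt_INR; auto).
    assert (0 < INR (S k)) by (apply lt_0_INR; lia).
    field. repeat split; lra. }
  assert (E1 : rsum (S m) (fun c => if Nat.eqb c 0 then p else 0) = p).
  { rewrite rsum_shift. cbn [Nat.eqb]. rewrite rsum_const. ring. }
  assert (E2 : rsum (S m) (fun c => if Nat.eqb c 0 then 0 else 1 / INR c) = H m).
  { rewrite rsum_shift. simpl Nat.eqb. unfold H. rewrite Rplus_0_l. apply rsum_ext. auto. }
  assert (E3 : rsum (S m) (fun c => if Nat.eqb c 0 then 0 else 1 / (p - INR c)) = H m).
  { rewrite rsum_reflect. cbn [rsum]. replace (S m - S m)%nat with O by lia. cbn [Nat.eqb]. rewrite Rplus_0_r.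
    unfold H. apply rsum_ext. intros k Hk.
    replace (Nat.eqb (S m - S k) 0) with false by (symmetry; apply Nat.eqb_neq; lia).
    f_equal. unfold p. rewrite minus_INR by lia. rewrite !S_INR. ring. }
  assert (Hm : H m <= 1 + ln (INR (S m))).
  { destruct m. lia. pose proof (harm (S m) ltac:(lia)).
    assert (ln (INR (S m)) < ln (INR (S (S m)))).
    { apply ln_increasing. apply lt_0_INR; lia. apply lt_INR; lia. }
    lra. }
  rewrite E, E1, E2, E3. fold p in Hm. nra.
Qed.

Open Scope R_scope.

Lemma cnt_ext n f g : (forall k, (k < n)%nat -> f k = g k) -> cnt n f = cnt n g.
Proof. induction n; intros Hx; simpl; auto. rewrite IHn, Hx; auto. Qed.

Lemma rsum_delta P' r F : (r < P')%nat -> rsum P' (fun c => if Nat.eqb r c then F c else 0) = F r.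
Proof.
  induction P'; intros Hr. lia. simpl rsum.
  destruct (Nat.eq_dec r P').
  - subst. rewrite Nat.eqb_refl.
    rewrite (rsum_ext _ _ (fun _ => 0)). rewrite rsum_const. ring.
    intros k Hk. replace (Nat.eqb P' k) with false by (symmetry; apply Nat.eqb_neq; lia). auto.
  - rewrite IHP' by lia. replace (Nat.eqb r P') with false by (symmetry; apply Nat.eqb_neq; lia). ring.
Qed.

Lemma rsum_count n P' (b : nat -> nat) (F' : nat -> R) (K : nat) :
  (forall v, (v < n)%nat -> (b v < P')%nat) ->
  (forall c, (c < P')%nat -> (cnt n (fun v => Nat.eqb (b v) c) <= K)%nat) ->
  (forall c, (c < P')%nat -> 0 <= F' c) ->
  rsum n (fun v => F' (b v)) <= INR K * rsum P' F'.
Proof.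
  intros Hb Hc HF.
  assert (E : forall m, (m <= n)%nat -> rsum m (fun v => F' (b v)) = rsum P' (fun c => INR (cnt m (fun v => Nat.eqb (b v) c)) * F' c)).
  { induction m; intros Hm.
    - simpl. rewrite (rsum_ext _ _ (fun _ => 0 * 0)), rsum_const by (intros; simpl; ring). ring.
    - change (rsum (S m) (fun v => F' (b v))) with (rsum m (fun v => F' (b v)) + F' (b m)).
      rewrite IHm by lia. rewrite <- (rsum_delta P' (b m) F') by (apply Hb; lia).
      rewrite <- rsum_plus. apply rsum_ext. intros c Hc'. simpl cnt. rewrite plus_INR.
      destruct (Nat.eqb (b m) c); simpl; ring. }
  rewrite E by lia. rewrite <- rsum_scal. apply rsum_le. intros c Hc'.
  apply Rmult_le_compat_r; auto. apply le_INR. auto.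
Qed.

Lemma rsum_ones n : rsum n (fun _ => 1) = INR n.
Proof. rewrite rsum_const. ring. Qed.

Lemma ep_nrm p z : nrm (ep_re p z) (ep_im p z) = 1.
Proof. unfold ep_re, ep_im. apply nrm_cs. Qed.

Lemma S_trivial s p M N a : S_abs s p M N a <= INR (Z.to_nat N).
Proof.
  change (S_abs s p M N a) with (nrm (S_re s p M N a) (S_im s p M N a)).
  unfold S_re, S_im. eapply Rle_trans. apply rsum_nrm.
  rewrite <- rsum_ones. apply rsum_le. intros k _. rewrite ep_nrm. lra.
Qed.

Lemma regroup (P Nn : nat) f : (Nn <= P * P)%nat ->
  rsum Nn f = rsum P (fun v => rsum P (fun t => if Nat.ltb (v + P * t) Nn then f (v + P * t)%nat else 0)).
Proof.
  intros H. rewrite (rsum_extend Nn (P * P) f H). rewrite rsum_block. apply rsum_swap.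
Qed.

Lemma inner_bound s p M a (Nn P v : nat) :
  prime p -> P = Z.to_nat p -> (v < P)%nat ->
  nrm (rsum P (fun t => if Nat.ltb (v + P * t) Nn then ep_re p (phase s p a (M + 1 + Z.of_nat (v + P * t))) else 0))
      (rsum P (fun t => if Nat.ltb (v + P * t) Nn then ep_im p (phase s p a (M + 1 + Z.of_nat (v + P * t))) else 0))
  <= Fb (INR P) (Z.to_nat (Bq s p a (M + 1 + Z.of_nat v) mod p)).
Proof.
  intros Hp HP Hv. pose proof (prime_ge_2 p Hp) as H2.
  set (x := (M + 1 + Z.of_nat v)%Z).
  set (cz := (Bq s p a x mod p)%Z). set (A := phase s p a x).
  assert (Hcz : (0 <= cz < p)%Z) by (apply Z.mod_pos_bound; lia).
  assert (IP : INR P = IZR p) by (rewrite HP, INR_IZR_INZ, Z2Nat.id by lia; auto).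
  assert (Key : forall t, ep_re p (phase s p a (M + 1 + Z.of_nat (v + P * t))) = ep_re p (A - Z.of_nat t * cz)
                    /\ ep_im p (phase s p a (M + 1 + Z.of_nat (v + P * t))) = ep_im p (A - Z.of_nat t * cz)).
  { intros t. apply ep_mod. lia.
    assert (Zp : Z.of_nat P = p) by (rewrite HP; apply Z2Nat.id; lia).
    replace (M + 1 + Z.of_nat (v + P * t))%Z with (x + p * Z.of_nat t)%Z
      by (unfold x; rewrite Nat2Z.inj_add, Nat2Z.inj_mul, Zp; ring).
    rewrite phase_shift by lia. fold A.
    rewrite (Zminus_mod A), (Zminus_mod A (Z.of_nat t * cz)).
    unfold cz. rewrite Zmult_mod_idemp_r. reflexivity. }
  destruct (Z.eq_dec cz 0) as [C0|C0].
  - rewrite C0. unfold Fb. simpl Z.to_nat. cbn [Nat.eqb].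
    eapply Rle_trans. apply rsum_nrm. rewrite <- rsum_ones. apply rsum_le. intros t _.
    destruct (Nat.ltb (v + P * t) Nn). rewrite ep_nrm. lra. rewrite nrm_0. lra.
  - destruct (prefix_exists P (fun t => Nat.ltb (v + P * t) Nn)) as [T [HT Ht]].
    { intros t Hs. apply Nat.ltb_lt in Hs. apply Nat.ltb_lt. lia. }
    rewrite (rsum_prefix P T _ (fun t => ep_re p (phase s p a (M + 1 + Z.of_nat (v + P * t))))) by auto.
    rewrite (rsum_prefix P T _ (fun t => ep_im p (phase s p a (M + 1 + Z.of_nat (v + P * t))))) by auto.
    set (al := 2 * PI * IZR A / IZR p). set (be := 2 * PI * IZR cz / IZR p).
    assert (IZp : 0 < IZR p) by (apply IZR_lt; lia).
    assert (Tr : forall t, 2 * PI * IZR (A - Z.of_nat t * cz) / IZR p = al - INR t * be).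
    { intros t. unfold al, be. rewrite minus_IZR, mult_IZR, <- INR_IZR_INZ. field. lra. }
    rewrite (rsum_ext T _ (fun t => cos (al - INR t * be))).
    2:{ intros t _. rewrite (proj1 (Key t)). unfold ep_re. rewrite Tr. auto. }
    rewrite (rsum_ext T (fun t => ep_im p _) (fun t => sin (al - INR t * be))).
    2:{ intros t _. rewrite (proj2 (Key t)). unfold ep_im. rewrite Tr. auto. }
    assert (Hcz' : (0 < IZR cz < IZR p)) by (split; apply IZR_lt; lia).
    destruct (inv_sin_bound (IZR cz) (IZR p) ltac:(lra) ltac:(lra)) as [Sp Sb].
    assert (Hb2 : be / 2 = PI * IZR cz / IZR p) by (unfold be; field; lra).
    rewrite <- Hb2 in Sp, Sb.
    destruct (geom_bound al be T Sp) as [G1 G2].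
    eapply Rle_trans. apply nrm_le_abs.
    unfold Fb. replace (Nat.eqb (Z.to_nat cz) 0) with false by (symmetry; apply Nat.eqb_neq; lia).
    rewrite IP. assert (IC : INR (Z.to_nat cz) = IZR cz). { rewrite INR_IZR_INZ. f_equal. apply Z2Nat.id. lia. } rewrite IC. lra.
Qed.

Lemma gcd_div (p : Z) (a : nat -> Z) n k : (forall j, (k <= j < k + n)%nat -> (p | a j)%Z) ->
  (p | fold_right Z.gcd p (map a (seq k n)))%Z.
Proof.
  revert k. induction n; intros k H; simpl. apply Z.divide_refl.
  apply Z.gcd_greatest. apply H; lia. apply IHn. intros; apply H; lia.
Qed.

Lemma j0_exists (p : Z) (a : nat -> Z) n : (exists j, (j < n)%nat /\ (a j mod p <> 0)%Z) \/ (forall j, (j < n)%nat -> (a j mod p = 0)%Z).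
Proof.
  induction n. right; intros; lia.
  destruct IHn as [[j [Hj Ha]]|Hall]. left; exists j; split; auto; lia.
  destruct (Z.eq_dec (a n mod p) 0). right. intros j Hj. destruct (Nat.eq_dec j n). subst; auto. apply Hall; lia.
  left. exists n. split; auto.
Qed.

Theorem theorem11 :
  forall s : nat, (1 <= s)%nat ->
  exists c : R, 0 < c /\
    forall (p M N : Z) (a : nat -> Z),
      prime p ->
      (1 <= N)%Z -> (N < p ^ 2)%Z ->
      gcd_vec s a p = 1%Z ->
      S_abs s p M N a <= c * INR s * IZR p * ln (IZR p).
Proof.
  intros s Hs. exists 30. split. lra. intros p M N a Hp HN1 HN2 Hg.
  pose proof (prime_ge_2 p Hp) as H2.
  set (P := Z.to_nat p).
  assert (IP : INR P = IZR p) by (unfold P; rewrite INR_IZR_INZ, Z2Nat.id by lia; auto).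
  assert (Hp2 : 2 <= IZR p) by (apply IZR_le; lia).
  assert (Hln : / 2 < ln (IZR p)).
  { destruct (Z.eq_dec p 2) as [->|]. apply ln_lt_2. pose proof ln_lt_2.
    assert (ln 2 < ln (IZR p)) by (apply ln_increasing; [lra| apply IZR_lt; lia]). lra. }
  assert (Hs1 : 1 <= INR s) by (apply (le_INR 1); auto).
  assert (IN : INR (Z.to_nat N) = IZR N) by (rewrite INR_IZR_INZ, Z2Nat.id by lia; auto).
  destruct (Z_le_gt_dec p (Z.of_nat s)) as [Big|Small].
  - eapply Rle_trans. apply S_trivial. rewrite IN.
    assert (IZR N <= IZR p * IZR p) by (rewrite <- mult_IZR; apply IZR_le; rewrite Z.pow_2_r in HN2; lia).
    assert (IZR p <= INR s) by (rewrite INR_IZR_INZ; apply IZR_le; lia).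
    assert (0 < IZR p * INR s) by nra.
    assert (IZR p * IZR p <= IZR p * INR s) by nra.
    assert (IZR p * INR s <= 30 * INR s * IZR p * ln (IZR p)) by nra. lra.
  - destruct (j0_exists p a s) as [[j0 [Hj0 Ha]]|Hall].
    2:{ exfalso. assert (D : (p | gcd_vec s a p)%Z).
        { unfold gcd_vec. apply gcd_div. intros j Hj. apply Z.mod_divide. lia. apply Hall. lia. }
        rewrite Hg in D. apply (prime_ndiv1 p Hp D). }
    set (Nn := Z.to_nat N).
    assert (HNn : (Nn <= P * P)%nat).
    { apply Nat2Z.inj_le. rewrite Nat2Z.inj_mul. unfold Nn, P. rewrite !Z2Nat.id by lia. rewrite Z.pow_2_r in HN2. lia. }
    change (S_abs s p M N a) with (nrm (S_re s p M N a) (S_im s p M N a)).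
    unfold S_re, S_im. fold Nn.
    rewrite (regroup P Nn _ HNn). rewrite (regroup P Nn (fun k => ep_im p _) HNn).
    eapply Rle_trans. apply rsum_nrm.
    eapply Rle_trans. apply rsum_le. intros v Hv. apply (inner_bound s p M a Nn P v Hp eq_refl Hv).
    eapply Rle_trans.
    apply (rsum_count P P (fun v => Z.to_nat (Bq s p a (M + 1 + Z.of_nat v) mod p)) (Fb (INR P)) (2 * s)).
    + intros v _. assert (0 <= Bq s p a (M + 1 + Z.of_nat v) mod p < p)%Z by (apply Z.mod_pos_bound; lia). unfold P. lia.
    + intros c Hc. 
      rewrite (cnt_ext _ _ (fun v => (Bq s p a (M + 1 + Z.of_nat v) mod p =? Z.of_nat c)%Z)).
      apply (b_count p M (Z.of_nat c) s a j0 Hp ltac:(lia) Hj0 Ha). unfold P in Hc. lia.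
      intros k _. assert (0 <= Bq s p a (M + 1 + Z.of_nat k) mod p < p)%Z by (apply Z.mod_pos_bound; lia).
      destruct (Nat.eqb_spec (Z.to_nat (Bq s p a (M + 1 + Z.of_nat k) mod p)) c);
      destruct (Z.eqb_spec (Bq s p a (M + 1 + Z.of_nat k) mod p) (Z.of_nat c)); auto; lia.
    + intros c Hc. unfold Fb. destruct (Nat.eqb c 0) eqn:E. pose proof (pos_INR P). lra.
      apply Nat.eqb_neq in E. assert (INR c < INR P) by (apply lt_INR; auto).
      assert (0 < INR c) by (apply lt_0_INR; lia).
      assert (0 < INR P / INR c) by (apply Rdiv_lt_0_compat; lra).
      assert (0 < INR P / (INR P - INR c)) by (apply Rdiv_lt_0_compat; lra). lra.
    + pose proof (Fsum P ltac:(unfold P; lia)) as FS. rewrite IP in FS.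
      rewrite mult_INR. simpl (INR 2). rewrite IP.
      assert (0 <= IZR p * INR s) by nra.
      assert (5 * IZR p * INR s <= 10 * IZR p * INR s * ln (IZR p)) by nra.
      assert (0 <= 2 * INR s) by lra.
      assert (2 * INR s * rsum P (Fb (IZR p)) <= 2 * INR s * (IZR p + 4 * IZR p * (1 + ln (IZR p)))) by (apply Rmult_le_compat_l; auto).
      nra.
Qed.
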